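(* For all finite multisets $\Gamma,\Delta$ of formulas: $\mathsf{G}(\mathbf{KT}_D)\vdash\Gamma\Rightarrow\Delta$ if and only if $\mathsf{G}(\mathbf{KT}^+_D)\vdash\emptyset\mid\Gamma\Rightarrow\Delta$.
   Context: Language: fix a finite nonempty set $\mathsf{Agt}$ of agents and a countable set $\mathsf{Prop}$ of propositional variables; $\mathsf{Grp}$ is the set of nonempty subsets of $\mathsf{Agt}$. Formulas: $\alpha::=p\mid\bot\mid\alpha\wedge\alpha\mid\alpha\vee\alpha\mid\alpha\rightarrow\alpha\mid\neg\alpha\mid D_G\alpha$ ($p\in\mathsf{Prop}$, $G\in\mathsf{Grp}$). Outmost-boxed formula: one of the form $D_G\gamma$. Derivable = root of a finite tree built from initial sequents by the rules of the calculus. Calculus $\mathsf{G}(\mathbf{KT}_D)$ on sequents $\Gamma\Rightarrow\Delta$ (pairs of finite multisets): initial sequents $\Gamma,p\Rightarrow p,\Delta$ and $\bot,\Gamma\Rightarrow\Delta$; rules $(R\wedge)$ from $\Gamma\Rightarrow\Delta,\alpha_1$ and $\Gamma\Rightarrow\Delta,\alpha_2$ infer $\Gamma\Rightarrow\Delta,\alpha_1\wedge\alpha_2$; $(L\wedge)$ from $\alpha_1,\alpha_2,\Gamma\Rightarrow\Delta$ infer $\alpha_1\wedge\alpha_2,\Gamma\Rightarrow\Delta$; $(R\vee)$ from $\Gamma\Rightarrow\Delta,\alpha_1,\alpha_2$ infer $\Gamma\Rightarrow\Delta,\alpha_1\vee\alpha_2$; $(L\vee)$ from $\alpha_1,\Gamma\Rightarrow\Delta$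 and $\alpha_2,\Gamma\Rightarrow\Delta$ infer $\alpha_1\vee\alpha_2,\Gamma\Rightarrow\Delta$; $(R\rightarrow)$ from $\alpha_1,\Gamma\Rightarrow\Delta,\alpha_2$ infer $\Gamma\Rightarrow\Delta,\alpha_1\rightarrow\alpha_2$; $(L\rightarrow)$ from $\Gamma\Rightarrow\Delta,\alpha_1$ and $\alpha_2,\Gamma\Rightarrow\Delta$ infer $\alpha_1\rightarrow\alpha_2,\Gamma\Rightarrow\Delta$; $(R\neg)$ from $\alpha,\Gamma\Rightarrow\Delta$ infer $\Gamma\Rightarrow\Delta,\neg\alpha$; $(L\neg)$ from $\Gamma\Rightarrow\Delta,\alpha$ infer $\neg\alpha,\Gamma\Rightarrow\Delta$; $(D_K)$: from $\alpha_1,\dots,\alpha_n\Rightarrow\beta$ ($n\ge0$) infer $\Sigma,D_{G_1}\alpha_1,\dots,D_{G_n}\alpha_n\Rightarrow D_G\beta,\Omega$ where all $G_i\subseteq G$, $\Sigma$ consists only of propositional variables, $\bot$, and $D_H\gamma$ with $H\not\subseteq G$, and $\Omega$ only of propositional variables, $\bot$, outmost-boxed formulas; $(D_T)$: from $D_G\alpha,\alpha,\Gamma\Rightarrow\Delta$ infer $D_G\alpha,\Gamma\Rightarrow\Delta$. Calculus $\mathsf{G}(\mathbf{KT}^+_D)$ on T-sequents $\Sigma\mid\Gamma\Rightarrow\Delta$ ($\Gamma,\Delta$ finite multisets of formulas, $\Sigma$ a finite multiset of outmost-boxed formulas): initial sequents $\Sigma\mid\Gamma,p\Rightarrow p,\Delta$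 and $\Sigma\mid\bot,\Gamma\Rightarrow\Delta$; the same eight propositional rules acting on $\Gamma,\Delta$ with $\Sigma$ unchanged; $(D_K^+)$: from $\emptyset\mid\alpha_1,\dots,\alpha_n\Rightarrow\beta$ ($n\ge0$) infer $\Sigma,D_{G_1}\alpha_1,\dots,D_{G_n}\alpha_n\mid\Pi\Rightarrow D_G\beta,\Omega$, provided $G_i\subseteq G$, $\Sigma$ consists only of formulas $D_H\gamma$ with $H\not\subseteq G$, $\Pi$ only of propositional variables and $\bot$, $\Omega$ only of propositional variables, $\bot$, outmost-boxed formulas; $(D_T^+)$: from $D_G\alpha,\Sigma\mid\Gamma,\alpha\Rightarrow\Delta$ infer $\Sigma\mid\Gamma,D_G\alpha\Rightarrow\Delta$. *)

(* Defs.v *)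
From mathcomp Require Import all_boot.
From Stdlib Require Import List Permutation.
Import ListNotations.

Set Implicit Arguments.
Unset Strict Implicit.
Unset Printing Implicit Defensive.

(* Agents: a finite type A (Agt); Prop = nat (countable). *)
Definition grp (A : finType) := {G : {set A} | G != set0}.

Inductive form (A : finType) : Type :=
| Var of nat
| Bot
| And of form A & form A
| Or of form A & form A
| Imp of form A & form A
| Neg of form A
| Dbox of grp A & form A.

Arguments Var {A}.
Arguments Bot {A}.

Section Calculi.
Variable A : finType.

Definition grp_sub (H G : grp A) : Prop := (val H \subset val G).

Definition boxed (f : form A) : Prop :=
  match f with Dbox _ _ => True | _ => False end.

Definition atomic (f : form A) : Prop :=
  match f with Var _ => True | Bot => True | _ => False end.

Definition sigmaK (G : grp A) (f : form A) : Prop :=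
  match f with
  | Var _ => True
  | Bot => True
  | Dbox H _ => ~ grp_sub H G
  | _ => False
  end.

Definition sigmaKp (G : grp A) (f : form A) : Prop :=
  match f with
  | Dbox H _ => ~ grp_sub H G
  | _ => False
  end.

Definition omegaK (f : form A) : Prop := atomic f \/ boxed f.

(* Sequents Gamma => Delta are pairs of finite multisets, represented as lists
   taken up to permutation (constructor der_perm). *)
Inductive derKT : list (form A) -> list (form A) -> Prop :=
| der_perm G D G' D' : derKT G D -> Permutation G G' -> Permutation D D' ->
    derKT G' D'
| der_id p G D : derKT (Var p :: G) (Var p :: D)
| der_bot G D : derKT (Bot :: G) D
| der_Rand G D a1 a2 : derKT G (a1 :: D) -> derKT G (a2 :: D) ->
    derKT G (And a1 a2 :: D)
| der_Land G D a1 a2 : derKT (a1 :: a2 :: G) D -> derKT (And a1 a2 :: G) D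
| der_Ror G D a1 a2 : derKT G (a1 :: a2 :: D) -> derKT G (Or a1 a2 :: D)
| der_Lor G D a1 a2 : derKT (a1 :: G) D -> derKT (a2 :: G) D ->
    derKT (Or a1 a2 :: G) D
| der_Rimp G D a1 a2 : derKT (a1 :: G) (a2 :: D) -> derKT G (Imp a1 a2 :: D)
| der_Limp G D a1 a2 : derKT G (a1 :: D) -> derKT (a2 :: G) D ->
    derKT (Imp a1 a2 :: G) D
| der_Rneg G D a : derKT (a :: G) D -> derKT G (Neg a :: D)
| der_Lneg G D a : derKT G (a :: D) -> derKT (Neg a :: G) D
| der_DK (l : list (grp A * form A)) (G : grp A) b S O :
    derKT (map snd l) [b] ->
    (forall p, In p l -> grp_sub p.1 G) ->
    (forall f, In f S -> sigmaK G f) ->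
    (forall f, In f O -> omegaK f) ->
    derKT (S ++ map (fun p => Dbox p.1 p.2) l) (Dbox G b :: O)
| der_DT G D (H : grp A) a : derKT (Dbox H a :: a :: G) D ->
    derKT (Dbox H a :: G) D.

(* T-sequents  Sigma | Gamma => Delta, Sigma a multiset of outmost-boxed
   formulas. *)
Inductive derKTp : list (form A) -> list (form A) -> list (form A) -> Prop :=
| derp_perm S G D S' G' D' : derKTp S G D -> Permutation S S' ->
    Permutation G G' -> Permutation D D' -> derKTp S' G' D'
| derp_id S p G D : (forall f, In f S -> boxed f) ->
    derKTp S (Var p :: G) (Var p :: D)
| derp_bot S G D : (forall f, In f S -> boxed f) -> derKTp S (Bot :: G) D
| derp_Rand S G D a1 a2 : derKTp S G (a1 :: D) -> derKTp S G (a2 :: D) ->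
    derKTp S G (And a1 a2 :: D)
| derp_Land S G D a1 a2 : derKTp S (a1 :: a2 :: G) D ->
    derKTp S (And a1 a2 :: G) D
| derp_Ror S G D a1 a2 : derKTp S G (a1 :: a2 :: D) ->
    derKTp S G (Or a1 a2 :: D)
| derp_Lor S G D a1 a2 : derKTp S (a1 :: G) D -> derKTp S (a2 :: G) D ->
    derKTp S (Or a1 a2 :: G) D
| derp_Rimp S G D a1 a2 : derKTp S (a1 :: G) (a2 :: D) ->
    derKTp S G (Imp a1 a2 :: D)
| derp_Limp S G D a1 a2 : derKTp S G (a1 :: D) -> derKTp S (a2 :: G) D ->
    derKTp S (Imp a1 a2 :: G) D
| derp_Rneg S G D a : derKTp S (a :: G) D -> derKTp S G (Neg a :: D)
| derp_Lneg S G D a : derKTp S G (a :: D) -> derKTp S (Neg a :: G) D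
| derp_DK (l : list (grp A * form A)) (G : grp A) b S P O :
    derKTp [] (map snd l) [b] ->
    (forall p, In p l -> grp_sub p.1 G) ->
    (forall f, In f S -> sigmaKp G f) ->
    (forall f, In f P -> atomic f) ->
    (forall f, In f O -> omegaK f) ->
    derKTp (S ++ map (fun p => Dbox p.1 p.2) l) P (Dbox G b :: O)
| derp_DT S G D (H : grp A) a : derKTp (Dbox H a :: S) (a :: G) D ->
    derKTp S (Dbox H a :: G) D.

End Calculi.

(* Main.v *)
Require Import Defs.
From mathcomp Require Import all_boot.
From Stdlib Require Import List Permutation Lia Classical.
From mathcomp Require Import zify.

Definition form_eq_dec {A : finType} : forall x y : form A, {x = y} + {x <> y}.
Proof. decide equality. apply PeanoNat.Nat.eq_dec.
case: (@eqP (grp A) g g0); [left|right]; done. Qed.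

Lemma cat_app {T : Type} (l m : list T) : cat l m = app l m.
Proof. by elim: l => //= x l ->. Qed.

Ltac psolve :=
  apply (Permutation_count_occ form_eq_dec);
  let z := fresh "z" in intro z;
  repeat match goal with H : Permutation _ _ |- _ =>
    let h := fresh "h" in
    pose proof (proj1 (Permutation_count_occ form_eq_dec _ _) H z) as h; clear H; revert h end;
  repeat progress (simpl; rewrite ?cat_app ?count_occ_app); intros;
  repeat match goal with
  | |- context [form_eq_dec ?x ?y] => destruct (form_eq_dec x y)
  | H : context [form_eq_dec ?x ?y] |- _ => destruct (form_eq_dec x y)
  end; lia.

Lemma permG {A : finType} (S G G' D : list (form A)) :
  derKTp S G D -> Permutation G G' -> derKTp S G' D.
Proof. intros H P; eapply derp_perm; eauto. Qed.
Lemma permD {A : finType} (S G D D' : list (form A)) :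
  derKTp S G D -> Permutation D D' -> derKTp S G D'.
Proof. intros H P; eapply derp_perm; eauto. Qed.
Lemma permS {A : finType} (S S' G D : list (form A)) :
  derKTp S G D -> Permutation S S' -> derKTp S' G D.
Proof. intros H P; eapply derp_perm; eauto. Qed.
Lemma kpermG {A : finType} (G G' D : list (form A)) :
  derKT G D -> Permutation G G' -> derKT G' D.
Proof. intros H P; eapply der_perm; eauto. Qed.
Lemma kpermD {A : finType} (G D D' : list (form A)) :
  derKT G D -> Permutation D D' -> derKT G D'.
Proof. intros H P; eapply der_perm; eauto. Qed.



Lemma plus_to_kt {A : finType} (S G D : list (form A)) :
  derKTp S G D -> derKT (S ++ G) D.
Proof.
induction 1.
- eapply der_perm; eauto. apply Permutation_app; auto.
- apply kpermG with (G := Var p :: S ++ G); [apply der_id|]. psolve.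
- apply kpermG with (G := Bot :: S ++ G); [apply der_bot|]. psolve.
- apply der_Rand; auto.
- apply kpermG with (G := And a1 a2 :: S ++ G); [apply der_Land; apply kpermG with (1:=IHderKTp)|]; psolve.
- apply der_Ror; auto.
- apply kpermG with (G := Or a1 a2 :: S ++ G); [apply der_Lor; [apply kpermG with (1:=IHderKTp1)|apply kpermG with (1:=IHderKTp2)]|]; psolve.
- apply der_Rimp; apply kpermG with (1:=IHderKTp); psolve.
- apply kpermG with (G := Imp a1 a2 :: S ++ G); [apply der_Limp; [apply IHderKTp1|apply kpermG with (1:=IHderKTp2)]|]; psolve.
- apply der_Rneg; apply kpermG with (1:=IHderKTp); psolve.
- apply kpermG with (G := Neg a :: S ++ G); [apply der_Lneg; apply IHderKTp|]; psolve.
- apply kpermG with (G := cat (S ++ P) (map (fun p => Dbox p.1 p.2) l)); [apply (@der_DK _ l G b (S ++ P) O); auto|].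
  + intros f Hf; apply in_app_or in Hf as [Hf|Hf].
    * specialize (H1 f Hf); destruct f; simpl in *; tauto.
    * specialize (H2 f Hf); destruct f; simpl in *; tauto.
  + psolve.
- apply kpermG with (G := Dbox H a :: S ++ G); [apply der_DT; apply kpermG with (1:=IHderKTp)|]; psolve.
Qed.

Fixpoint fsize {A : finType} (f : form A) : nat :=
  match f with
  | Var _ => 1 | Bot => 1
  | And a b => (fsize a + fsize b).+1
  | Or a b => (fsize a + fsize b).+1
  | Imp a b => (fsize a + fsize b).+1
  | Neg a => (fsize a).+1
  | Dbox _ a => (fsize a).+1
  end.

Definition msize {A : finType} (l : list (form A)) : nat :=
  fold_right (fun f n => (fsize f + n)%coq_nat) 0 l.

Lemma msize_perm {A : finType} {X Y : list (form A)} : Permutation X Y -> msize X = msize Y.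
Proof. induction 1; simpl; lia. Qed.

Lemma find_nonatomic {A : finType} (X : list (form A)) :
  (forall f, In f X -> atomic f) \/ exists c X', Permutation X (c :: X') /\ ~ atomic c.
Proof.
induction X as [|x X IH]; [left; simpl; tauto|].
destruct (classic (atomic x)) as [Hx|Hx].
- destruct IH as [IH | [c [X' [HP Hc]]]].
  + left; intros f [<-|Hf]; auto.
  + right; exists c, (x :: X'); split; auto.
    apply perm_trans with (x :: c :: X'); [constructor; auto| constructor].
- right; exists x, X; auto.
Qed.

Lemma find_nonomega {A : finType} (X : list (form A)) :
  (forall f, In f X -> omegaK f) \/ exists c X', Permutation X (c :: X') /\ ~ omegaK c.
Proof.
induction X as [|x X IH]; [left; simpl; tauto|].
destruct (classic (omegaK x)) as [Hx|Hx].
- destruct IH as [IH | [c [X' [HP Hc]]]].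
  + left; intros f [<-|Hf]; auto.
  + right; exists c, (x :: X'); split; auto.
    apply perm_trans with (x :: c :: X'); [constructor; auto| constructor].
- right; exists x, X; auto.
Qed.

Lemma KP {A : finType} (G : grp A) b : forall n (S : list (form A)) l X Y,
  (msize X + msize Y < n)%coq_nat ->
  (forall Z, derKTp [::] (Z ++ map snd l) [:: b]) ->
  (forall p, In p l -> grp_sub p.1 G) ->
  (forall f, In f S -> sigmaKp G f) ->
  derKTp (S ++ map (fun p => Dbox p.1 p.2) l) X (Dbox G b :: Y).
Proof.
induction n; intros S l X Y Hn Hb Hl HS; [lia|].
destruct (find_nonatomic X) as [HX | [c [X' [HP Hc]]]].
- destruct (find_nonomega Y) as [HY | [c [Y' [HP Hc]]]].
  + apply permS with (S := cat S (map (fun p => Dbox p.1 p.2) l)); [apply derp_DK; auto|psolve].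
    exact (Hb [::]).
  + apply permD with (D := c :: Dbox G b :: Y'); [|psolve].
    rewrite (msize_perm HP) in Hn; simpl in Hn.
    destruct c; try (exfalso; apply Hc; unfold omegaK; simpl; tauto); simpl in Hn.
    * apply derp_Rand; [apply permD with (D := Dbox G b :: c1 :: Y')|apply permD with (D := Dbox G b :: c2 :: Y')]; try (apply IHn; auto; simpl; lia); psolve.
    * apply derp_Ror; apply permD with (D := Dbox G b :: c1 :: c2 :: Y'); try (apply IHn; auto; simpl; lia); psolve.
    * apply derp_Rimp; apply permD with (D := Dbox G b :: c2 :: Y'); try (apply IHn; auto; simpl; lia); psolve.
    * apply derp_Rneg; apply IHn; auto; simpl; lia.
- apply permG with (G := c :: X'); [|psolve].
  rewrite (msize_perm HP) in Hn; simpl in Hn.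
  destruct c; try (exfalso; apply Hc; simpl; tauto); simpl in Hn.
  * apply derp_Land; apply IHn; auto; simpl; lia.
  * apply derp_Lor; apply IHn; auto; simpl; lia.
  * apply derp_Limp; [apply permD with (D := Dbox G b :: c1 :: Y)|]; try (apply IHn; auto; simpl; lia); psolve.
  * apply derp_Lneg; apply permD with (D := Dbox G b :: c :: Y); try (apply IHn; auto; simpl; lia); psolve.
  * apply derp_DT. destruct (classic (grp_sub g G)) as [Hg|Hg].
    -- apply permS with (S := S ++ map (fun p => Dbox p.1 p.2) ((g, c) :: l)); [|psolve].
       apply IHn; auto; simpl; try lia.
       ++ intro Z; specialize (Hb (Z ++ [:: c])); rewrite <- app_assoc in Hb; exact Hb.
       ++ intros p [<-|Hp]; auto.
    -- apply (IHn (Dbox g c :: S)); auto; simpl; try lia.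
       intros f [<-|Hf]; simpl; auto.
Qed.

Lemma weakL {A : finType} (S G D : list (form A)) :
  derKTp S G D -> forall Z, derKTp S (Z ++ G) D.
Proof.
induction 1; intro Z.
- eapply derp_perm; [apply (IHderKTp Z)| eauto | apply Permutation_app_head; auto | eauto].
- apply permG with (G := Var p :: Z ++ G); [apply derp_id; auto | psolve].
- apply permG with (G := Bot :: Z ++ G); [apply derp_bot; auto | psolve].
- apply derp_Rand; auto.
- apply permG with (G := And a1 a2 :: Z ++ G); [apply derp_Land; apply permG with (1 := IHderKTp Z)|]; psolve.
- apply derp_Ror; auto.
- apply permG with (G := Or a1 a2 :: Z ++ G); [apply derp_Lor; [apply permG with (1 := IHderKTp1 Z)|apply permG with (1 := IHderKTp2 Z)]|]; psolve.
- apply derp_Rimp; apply permG with (1 := IHderKTp Z); psolve.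
- apply permG with (G := Imp a1 a2 :: Z ++ G); [apply derp_Limp; [apply (IHderKTp1 Z)|apply permG with (1 := IHderKTp2 Z)]|]; psolve.
- apply derp_Rneg; apply permG with (1 := IHderKTp Z); psolve.
- apply permG with (G := Neg a :: Z ++ G); [apply derp_Lneg; apply (IHderKTp Z)|]; psolve.
- apply permS with (S := S ++ map (fun p => Dbox p.1 p.2) l); [|psolve].
  apply KP with (n := (msize (Z ++ P) + msize O).+1); auto.
- apply permG with (G := Dbox H a :: Z ++ G); [apply derp_DT; apply permG with (1 := IHderKTp Z)|]; psolve.
Qed.

Lemma pcs {A : finType} {x c : form A} {L G} : Permutation (x :: L) (c :: G) ->
  (x = c /\ Permutation L G) \/ (exists G2, Permutation L (c :: G2) /\ Permutation G (x :: G2)).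
Proof.
intro HP. destruct (classic (x = c)) as [<-|Hne].
- left; split; auto; eapply Permutation_cons_inv; eauto.
- right. assert (Hin : In x (c :: G)) by (apply (Permutation_in _ HP); left; auto).
  destruct Hin as [->|Hin]; [congruence|].
  destruct (in_split _ _ Hin) as [G1 [G3 ->]]. exists (G1 ++ G3). split; psolve.
Qed.

Lemma pcs2 {A : finType} {x c : form A} {L G} : Permutation (x :: L) (c :: c :: G) ->
  (x = c /\ Permutation L (c :: G)) \/ (exists G2, Permutation L (c :: c :: G2) /\ Permutation G (x :: G2)).
Proof.
intro HP. destruct (classic (x = c)) as [<-|Hne].
- left; split; auto; eapply Permutation_cons_inv; eauto.
- right. assert (Hin : In x (c :: c :: G)) by (apply (Permutation_in _ HP); left; auto).
  destruct Hin as [->|[->|Hin]]; [congruence|congruence|].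
  destruct (in_split _ _ Hin) as [G1 [G3 ->]]. exists (G1 ++ G3). split; psolve.
Qed.

Lemma in_perm {A : finType} {x : form A} {L} : In x L -> exists L', Permutation L (x :: L').
Proof. intro H. destruct (in_split _ _ H) as [L1 [L2 ->]]. exists (L1 ++ L2). psolve. Qed.

Ltac dp H := eapply derp_perm; [exact H | psolve | psolve | psolve].

Inductive lopt {A : finType} : form A -> list (form A) -> list (form A) -> list (form A) -> Prop :=
| lo_and a b : lopt (And a b) [:: a; b] [::] [::]
| lo_or1 a b : lopt (Or a b) [:: a] [::] [::]
| lo_or2 a b : lopt (Or a b) [:: b] [::] [::]
| lo_imp1 a b : lopt (Imp a b) [::] [:: a] [::]
| lo_imp2 a b : lopt (Imp a b) [:: b] [::] [::]
| lo_neg a : lopt (Neg a) [::] [:: a] [::]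
| lo_box H a : lopt (Dbox H a) [:: a] [::] [:: Dbox H a].

Lemma lopt_natom {A : finType} {c : form A} {X Y Z} : lopt c X Y Z -> ~ atomic c.
Proof. destruct 1; simpl; tauto. Qed.
Lemma lopt_Zbox {A : finType} {c : form A} {X Y Z} : lopt c X Y Z -> forall f, In f Z -> boxed f.
Proof. destruct 1; simpl; try tauto; intros f [<-|[]]; simpl; auto. Qed.

Lemma linv {A : finType} {S G0 D : list (form A)} : derKTp S G0 D ->
  forall c X Y Z T, lopt c X Y Z -> Permutation G0 (c :: T) ->
  derKTp (Z ++ S) (X ++ T) (Y ++ D).
Proof.
induction 1; intros c X Y Z T Ho HP.
- eapply derp_perm; [apply (IHderKTp c X Y Z T Ho); eapply perm_trans; eauto | | apply Permutation_refl | ];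
  apply Permutation_app_head; auto.
- destruct (pcs HP) as [[<- _]|[G2 [H1 H2]]]; [exfalso; apply (lopt_natom Ho); exact I|].
  apply permG with (G := Var p :: X ++ G2); [apply permD with (D := Var p :: Y ++ D); [apply derp_id|psolve]|psolve].
  intros f Hf; apply in_app_or in Hf as [Hf|Hf]; [apply (lopt_Zbox Ho)|apply H]; auto.
- destruct (pcs HP) as [[<- _]|[G2 [H1 H2]]]; [exfalso; apply (lopt_natom Ho); exact I|].
  apply permG with (G := Bot :: X ++ G2); [apply derp_bot|psolve].
  intros f Hf; apply in_app_or in Hf as [Hf|Hf]; [apply (lopt_Zbox Ho)|apply H]; auto.
- apply permD with (D := And a1 a2 :: Y ++ D); [|psolve].
  apply derp_Rand; [dp (IHderKTp1 c X Y Z T Ho HP)|dp (IHderKTp2 c X Y Z T Ho HP)].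
- destruct (pcs HP) as [[<- HG]|[G2 [H1 H2]]].
  + inversion Ho; subst; simpl. dp H.
  + apply permG with (G := And a1 a2 :: X ++ G2); [|psolve].
    apply derp_Land; dp (IHderKTp c X Y Z (a1 :: a2 :: G2) Ho ltac:(psolve)).
- apply permD with (D := Or a1 a2 :: Y ++ D); [|psolve].
  apply derp_Ror; dp (IHderKTp c X Y Z T Ho HP).
- destruct (pcs HP) as [[<- HG]|[G2 [H1 H2]]].
  + inversion Ho; subst; simpl; [dp H|dp H0].
  + apply permG with (G := Or a1 a2 :: X ++ G2); [|psolve].
    apply derp_Lor; [dp (IHderKTp1 c X Y Z (a1 :: G2) Ho ltac:(psolve))|dp (IHderKTp2 c X Y Z (a2 :: G2) Ho ltac:(psolve))].
- apply permD with (D := Imp a1 a2 :: Y ++ D); [|psolve].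
  apply derp_Rimp; dp (IHderKTp c X Y Z (a1 :: T) Ho ltac:(psolve)).
- destruct (pcs HP) as [[<- HG]|[G2 [H1 H2]]].
  + inversion Ho; subst; simpl; [dp H|dp H0].
  + apply permG with (G := Imp a1 a2 :: X ++ G2); [|psolve].
    apply derp_Limp; [dp (IHderKTp1 c X Y Z G2 Ho ltac:(psolve))|dp (IHderKTp2 c X Y Z (a2 :: G2) Ho ltac:(psolve))].
- apply permD with (D := Neg a :: Y ++ D); [|psolve].
  apply derp_Rneg; dp (IHderKTp c X Y Z (a :: T) Ho ltac:(psolve)).
- destruct (pcs HP) as [[<- HG]|[G2 [H1 H2]]].
  + inversion Ho; subst; simpl; dp H.
  + apply permG with (G := Neg a :: X ++ G2); [|psolve].
    apply derp_Lneg; dp (IHderKTp c X Y Z G2 Ho ltac:(psolve)).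
- exfalso; apply (lopt_natom Ho); apply H2; apply Permutation_in with (c :: T); [symmetry; auto | left; auto].
- destruct (pcs HP) as [[<- HG]|[G2 [H1 H2]]].
  + inversion Ho; subst; simpl; dp H0.
  + apply permG with (G := Dbox H a :: X ++ G2); [|psolve].
    apply derp_DT; dp (IHderKTp c X Y Z (a :: G2) Ho ltac:(psolve)).
Qed.

Inductive ropt {A : finType} : form A -> list (form A) -> list (form A) -> Prop :=
| ro_and1 a b : ropt (And a b) [::] [:: a]
| ro_and2 a b : ropt (And a b) [::] [:: b]
| ro_or a b : ropt (Or a b) [::] [:: a; b]
| ro_imp a b : ropt (Imp a b) [:: a] [:: b]
| ro_neg a : ropt (Neg a) [:: a] [::].

Lemma ropt_nomega {A : finType} {c : form A} {X Y} : ropt c X Y -> ~ omegaK c.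
Proof. destruct 1; unfold omegaK; simpl; tauto. Qed.

Lemma rinv {A : finType} {S G D0 : list (form A)} : derKTp S G D0 ->
  forall c X Y T, ropt c X Y -> Permutation D0 (c :: T) ->
  derKTp S (X ++ G) (Y ++ T).
Proof.
induction 1; intros c X Y T Ho HP.
- eapply derp_perm; [apply (IHderKTp c X Y T Ho); eapply perm_trans; eauto | auto | | apply Permutation_refl];
  apply Permutation_app_head; auto.
- destruct (pcs HP) as [[<- _]|[G2 [H1 H2]]]; [exfalso; apply (ropt_nomega Ho); left; exact I|].
  apply permG with (G := Var p :: X ++ G); [apply permD with (D := Var p :: Y ++ G2); [apply derp_id|psolve]|psolve]; auto.
- apply permG with (G := Bot :: X ++ G); [apply derp_bot|psolve]; auto.
- destruct (pcs HP) as [[<- HG]|[G2 [H1 H2]]].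
  + inversion Ho; subst; simpl; [dp H|dp H0].
  + apply permD with (D := And a1 a2 :: Y ++ G2); [|psolve].
    apply derp_Rand; [dp (IHderKTp1 c X Y (a1 :: G2) Ho ltac:(psolve))|dp (IHderKTp2 c X Y (a2 :: G2) Ho ltac:(psolve))].
- apply permG with (G := And a1 a2 :: X ++ G); [|psolve].
  apply derp_Land; dp (IHderKTp c X Y T Ho HP).
- destruct (pcs HP) as [[<- HG]|[G2 [H1 H2]]].
  + inversion Ho; subst; simpl; dp H.
  + apply permD with (D := Or a1 a2 :: Y ++ G2); [|psolve].
    apply derp_Ror; dp (IHderKTp c X Y (a1 :: a2 :: G2) Ho ltac:(psolve)).
- apply permG with (G := Or a1 a2 :: X ++ G); [|psolve].
  apply derp_Lor; [dp (IHderKTp1 c X Y T Ho HP)|dp (IHderKTp2 c X Y T Ho HP)].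
- destruct (pcs HP) as [[<- HG]|[G2 [H1 H2]]].
  + inversion Ho; subst; simpl; dp H.
  + apply permD with (D := Imp a1 a2 :: Y ++ G2); [|psolve].
    apply derp_Rimp; dp (IHderKTp c X Y (a2 :: G2) Ho ltac:(psolve)).
- apply permG with (G := Imp a1 a2 :: X ++ G); [|psolve].
  apply derp_Limp; [dp (IHderKTp1 c X Y (a1 :: T) Ho ltac:(psolve))|dp (IHderKTp2 c X Y T Ho HP)].
- destruct (pcs HP) as [[<- HG]|[G2 [H1 H2]]].
  + inversion Ho; subst; simpl; dp H.
  + apply permD with (D := Neg a :: Y ++ G2); [|psolve].
    apply derp_Rneg; dp (IHderKTp c X Y G2 Ho ltac:(psolve)).
- apply permG with (G := Neg a :: X ++ G); [|psolve].
  apply derp_Lneg; dp (IHderKTp c X Y (a :: T) Ho ltac:(psolve)).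
- exfalso; apply (ropt_nomega Ho).
  assert (Hin : In c (Dbox G b :: O)) by (apply Permutation_in with (c :: T); [symmetry; auto | left; auto]).
  destruct Hin as [<-|Hin]; [right; exact I| apply H3; auto].
- apply permG with (G := Dbox H a :: X ++ G); [|psolve].
  apply derp_DT; dp (IHderKTp c X Y T Ho HP).
Qed.

Definition CLp {A : finType} (c : form A) := forall S G0 D G, derKTp S G0 D ->
  Permutation G0 (c :: c :: G) -> derKTp S (c :: G) D.
Definition CRp {A : finType} (c : form A) := forall S G D0 D, derKTp S G D0 ->
  Permutation D0 (c :: c :: D) -> derKTp S G (c :: D).
Definition CSp {A : finType} (c : form A) := forall S0 G D S, derKTp S0 G D ->
  Permutation S0 (c :: c :: S) -> derKTp (c :: S) G D.

Lemma in_map_box {A : finType} (c : form A) S l G :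
  In c (map (fun p => Dbox p.1 p.2) l) -> In c S ->
  (forall p, In p l -> grp_sub p.1 G) -> (forall f, In f S -> sigmaKp G f) -> False.
Proof.
intros H1 H2 Hl HS. apply in_map_iff in H1 as [p [<- Hp]].
apply (HS _ H2); simpl; auto.
Qed.

Lemma pair_perm {T : Type} {p : T} {l} : In p l -> exists l', Permutation l (p :: l').
Proof. intro H. destruct (in_split _ _ H) as [l1 [l2 ->]]. exists (l1 ++ l2).
symmetry; apply Permutation_middle. Qed.

Lemma CS_gen {A : finType} (c : form A) : (forall H a, c = Dbox H a -> CLp a) -> CSp c.
Proof.
intros Hc S0 G0 D0 S1 Hd. revert S1. induction Hd; intros T HP.
- eapply derp_perm; [apply (IHHd T); eapply perm_trans; eauto | apply Permutation_refl | auto | auto].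
- apply derp_id; intros f Hf; apply H; apply Permutation_in with (c :: c :: T); [symmetry; auto|].
  destruct Hf; [left|right; right]; auto.
- apply derp_bot; intros f Hf; apply H; apply Permutation_in with (c :: c :: T); [symmetry; auto|].
  destruct Hf; [left|right; right]; auto.
- apply derp_Rand; auto.
- apply derp_Land; auto.
- apply derp_Ror; auto.
- apply derp_Lor; auto.
- apply derp_Rimp; auto.
- apply derp_Limp; auto.
- apply derp_Rneg; auto.
- apply derp_Lneg; auto.
- rename Hd into Hprem, H into Hl, H0 into HS, H1 into HPa, H2 into HO.
  assert (Hin : In c (S ++ map (fun p => Dbox p.1 p.2) l)) by
    (apply Permutation_in with (c :: c :: T); [psolve | left; auto]).
  apply in_app_or in Hin as [Hin|Hin].
  + destruct (in_perm Hin) as [S1 HS1].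
    assert (Hin2 : In c (S1 ++ map (fun p => Dbox p.1 p.2) l)) by
      (apply Permutation_in with (c :: T); [psolve | left; auto]).
    apply in_app_or in Hin2 as [Hin2|Hin2]; [|exfalso; apply (in_map_box c S l G); auto].
    destruct (in_perm Hin2) as [S2 HS2].
    apply permS with (S := cat (c :: S2) (map (fun p => Dbox p.1 p.2) l)); [|psolve].
    apply derp_DK; auto.
    intros f Hf; apply HS; apply Permutation_in with (c :: c :: S2); [psolve|].
    destruct Hf; [left|right; right]; auto.
  + assert (Hin' := Hin). apply in_map_iff in Hin' as [p [Hpc Hp]].
    destruct (pair_perm Hp) as [l1 Hl1].
    assert (Hm1 := Permutation_map (fun p => Dbox p.1 p.2) Hl1). simpl in Hm1. rewrite Hpc in Hm1.
    assert (Hin2 : In c (S ++ map (fun p => Dbox p.1 p.2) l1)) by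
      (apply Permutation_in with (c :: T); [psolve | left; auto]).
    apply in_app_or in Hin2 as [Hin2|Hin2]; [exfalso; apply (in_map_box c S l G); auto|].
    assert (Hin2' := Hin2). apply in_map_iff in Hin2' as [q [Hqc Hq]].
    destruct (pair_perm Hq) as [l2 Hl2].
    assert (Hm2 := Permutation_map (fun p => Dbox p.1 p.2) Hl2). simpl in Hm2. rewrite Hqc in Hm2.
    destruct p as [h a]; destruct q as [h' a']; simpl in *. subst c. inversion Hqc; subst.
    apply permS with (S := cat S (map (fun p => Dbox p.1 p.2) ((h, a) :: l2))); [|simpl; psolve].
    apply derp_DK; auto.
    * assert (Hs1 := Permutation_map snd Hl1). assert (Hs2 := Permutation_map snd Hl2). simpl in *.
      apply (Hc h a erefl _ _ _ _ Hprem). psolve.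
    * intros x Hx; apply Hl. apply Permutation_in with ((h, a) :: (h, a) :: l2).
      { symmetry. eapply perm_trans; [apply Hl1|]. constructor; auto. }
      destruct Hx; [left|right; right]; auto.
- apply derp_DT. apply permS with (S := Dbox H a :: c :: T); [|psolve].
  apply permS with (S := c :: Dbox H a :: T); [apply IHHd; psolve | psolve].
Qed.

Lemma CL_gen {A : finType} (c : form A) :
  (forall a b, c = And a b \/ c = Or a b -> CLp a /\ CLp b) ->
  (forall a b, c = Imp a b -> CRp a /\ CLp b) ->
  (forall a, c = Neg a -> CRp a) ->
  (forall H a, c = Dbox H a -> CSp c /\ CLp a) -> CLp c.
Proof.
intros Hao Himp Hneg Hbox S0 G0 D0 G1 Hd. revert G1. induction Hd; intros T HP.
- eapply derp_perm; [apply (IHHd T); eapply perm_trans; eauto | auto | apply Permutation_refl | auto].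
- destruct (pcs2 HP) as [[<- H1]|[G2 [H1 H2]]].
  + apply derp_id; auto.
  + apply permG with (G := Var p :: c :: G2); [apply derp_id; auto|psolve].
- destruct (pcs2 HP) as [[<- H1]|[G2 [H1 H2]]].
  + apply derp_bot; auto.
  + apply permG with (G := Bot :: c :: G2); [apply derp_bot; auto|psolve].
- apply derp_Rand; auto.
- destruct (pcs2 HP) as [[<- H1]|[G2 [H1 H2]]].
  + destruct (Hao a1 a2 (or_introl erefl)) as [C1 C2].
    have H3 := linv Hd _ _ _ _ (a1 :: a2 :: T) (lo_and a1 a2) ltac:(psolve). simpl in H3.
    have H4 := C1 _ _ _ (a2 :: a2 :: T) H3 ltac:(psolve).
    have H5 := C2 _ _ _ (a1 :: T) H4 ltac:(psolve).
    apply derp_Land; dp H5.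
  + apply permG with (G := And a1 a2 :: c :: G2); [|psolve].
    apply derp_Land; dp (IHHd (a1 :: a2 :: G2) ltac:(psolve)).
- apply derp_Ror; auto.
- destruct (pcs2 HP) as [[<- H1]|[G2 [H1 H2]]].
  + destruct (Hao a1 a2 (or_intror erefl)) as [C1 C2].
    have H3 := linv Hd1 _ _ _ _ (a1 :: T) (lo_or1 a1 a2) ltac:(psolve). simpl in H3.
    have H4 := linv Hd2 _ _ _ _ (a2 :: T) (lo_or2 a1 a2) ltac:(psolve). simpl in H4.
    apply derp_Lor; [apply (C1 _ _ _ _ H3)|apply (C2 _ _ _ _ H4)]; psolve.
  + apply permG with (G := Or a1 a2 :: c :: G2); [|psolve].
    apply derp_Lor; [dp (IHHd1 (a1 :: G2) ltac:(psolve))|dp (IHHd2 (a2 :: G2) ltac:(psolve))].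
- apply derp_Rimp; dp (IHHd (a1 :: T) ltac:(psolve)).
- destruct (pcs2 HP) as [[<- H1]|[G2 [H1 H2]]].
  + destruct (Himp a1 a2 erefl) as [C1 C2].
    have H3 := linv Hd1 _ _ _ _ (T) (lo_imp1 a1 a2) ltac:(psolve). simpl in H3.
    have H4 := linv Hd2 _ _ _ _ (a2 :: T) (lo_imp2 a1 a2) ltac:(psolve). simpl in H4.
    apply derp_Limp; [apply (C1 _ _ _ _ H3)|apply (C2 _ _ _ _ H4)]; psolve.
  + apply permG with (G := Imp a1 a2 :: c :: G2); [|psolve].
    apply derp_Limp; [dp (IHHd1 G2 ltac:(psolve))|dp (IHHd2 (a2 :: G2) ltac:(psolve))].
- apply derp_Rneg; dp (IHHd (a :: T) ltac:(psolve)).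
- destruct (pcs2 HP) as [[<- H1]|[G2 [H1 H2]]].
  + have C1 := Hneg a erefl.
    have H3 := linv Hd _ _ _ _ (T) (lo_neg a) ltac:(psolve). simpl in H3.
    apply derp_Lneg; apply (C1 _ _ _ _ H3); psolve.
  + apply permG with (G := Neg a :: c :: G2); [|psolve].
    apply derp_Lneg; dp (IHHd G2 ltac:(psolve)).
- apply derp_DK; auto.
  intros f Hf; apply H1; apply Permutation_in with (c :: c :: T); [symmetry; auto|].
  destruct Hf; [left|right; right]; auto.
- destruct (pcs2 HP) as [[<- H1]|[G2 [H1 H2]]].
  + destruct (Hbox H a erefl) as [C1 C2].
    have H3 := linv Hd _ _ _ _ (a :: T) (lo_box H a) ltac:(psolve). simpl in H3.
    have H4 := C1 _ _ _ S H3 ltac:(psolve).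
    have H5 := C2 _ _ _ T H4 ltac:(psolve).
    apply derp_DT; exact H5.
  + apply permG with (G := Dbox H a :: c :: G2); [|psolve].
    apply derp_DT; dp (IHHd (a :: G2) ltac:(psolve)).
Qed.

Lemma CR_gen {A : finType} (c : form A) :
  (forall a b, c = And a b \/ c = Or a b -> CRp a /\ CRp b) ->
  (forall a b, c = Imp a b -> CLp a /\ CRp b) ->
  (forall a, c = Neg a -> CLp a) -> CRp c.
Proof.
intros Hao Himp Hneg S0 G0 D0 D1 Hd. revert D1. induction Hd; intros T HP.
- eapply derp_perm; [apply (IHHd T); eapply perm_trans; eauto | auto | auto | apply Permutation_refl].
- destruct (pcs2 HP) as [[<- H1]|[G2 [H1 H2]]].
  + apply derp_id; auto.
  + apply permD with (D := Var p :: c :: G2); [apply derp_id; auto|psolve].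
- apply derp_bot; auto.
- destruct (pcs2 HP) as [[<- H1]|[G2 [H1 H2]]].
  + destruct (Hao a1 a2 (or_introl erefl)) as [C1 C2].
    have H3 := rinv Hd1 _ _ _ (a1 :: T) (ro_and1 a1 a2) ltac:(psolve). simpl in H3.
    have H4 := rinv Hd2 _ _ _ (a2 :: T) (ro_and2 a1 a2) ltac:(psolve). simpl in H4.
    apply derp_Rand; [apply (C1 _ _ _ _ H3)|apply (C2 _ _ _ _ H4)]; psolve.
  + apply permD with (D := And a1 a2 :: c :: G2); [|psolve].
    apply derp_Rand; [dp (IHHd1 (a1 :: G2) ltac:(psolve))|dp (IHHd2 (a2 :: G2) ltac:(psolve))].
- apply derp_Land; auto.
- destruct (pcs2 HP) as [[<- H1]|[G2 [H1 H2]]].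
  + destruct (Hao a1 a2 (or_intror erefl)) as [C1 C2].
    have H3 := rinv Hd _ _ _ (a1 :: a2 :: T) (ro_or a1 a2) ltac:(psolve). simpl in H3.
    have H4 := C1 _ _ _ (a2 :: a2 :: T) H3 ltac:(psolve).
    have H5 := C2 _ _ _ (a1 :: T) H4 ltac:(psolve).
    apply derp_Ror; dp H5.
  + apply permD with (D := Or a1 a2 :: c :: G2); [|psolve].
    apply derp_Ror; dp (IHHd (a1 :: a2 :: G2) ltac:(psolve)).
- apply derp_Lor; auto.
- destruct (pcs2 HP) as [[<- H1]|[G2 [H1 H2]]].
  + destruct (Himp a1 a2 erefl) as [C1 C2].
    have H3 := rinv Hd _ _ _ (a2 :: T) (ro_imp a1 a2) ltac:(psolve). simpl in H3.
    have H4 := C1 _ _ _ G H3 ltac:(psolve).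
    have H5 := C2 _ _ _ T H4 ltac:(psolve).
    apply derp_Rimp; exact H5.
  + apply permD with (D := Imp a1 a2 :: c :: G2); [|psolve].
    apply derp_Rimp; dp (IHHd (a2 :: G2) ltac:(psolve)).
- apply derp_Limp; [dp (IHHd1 (a1 :: T) ltac:(psolve))|apply IHHd2; auto].
- destruct (pcs2 HP) as [[<- H1]|[G2 [H1 H2]]].
  + have C1 := Hneg a erefl.
    have H3 := rinv Hd _ _ _ T (ro_neg a) ltac:(psolve). simpl in H3.
    apply derp_Rneg; apply (C1 _ _ _ _ H3); psolve.
  + apply permD with (D := Neg a :: c :: G2); [|psolve].
    apply derp_Rneg; dp (IHHd G2 ltac:(psolve)).
- apply derp_Lneg; dp (IHHd (a :: T) ltac:(psolve)).
- destruct (pcs2 HP) as [[<- H4]|[G2 [H4 H5]]].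
  + apply derp_DK; auto.
    intros f Hf; apply H2; apply Permutation_in with (Dbox G b :: T); [symmetry; auto|right; auto].
  + apply permD with (D := Dbox G b :: c :: G2); [|psolve].
    apply derp_DK; auto.
    intros f Hf; apply H2; apply Permutation_in with (c :: c :: G2); [symmetry; auto|].
    destruct Hf; [left|right; right]; auto.
- apply derp_DT; auto.
Qed.

Ltac fin_contr := intros; repeat match goal with H : _ \/ _ |- _ => destruct H end;
  try discriminate; try (match goal with H : _ = _ |- _ => inversion H; subst; tauto end).

Lemma contr {A : finType} (c : form A) : CSp c /\ CLp c /\ CRp c.
Proof.
induction c as [n| |a IHa b IHb|a IHa b IHb|a IHa b IHb|a IHa|h a IHa];
  match goal with |- CSp ?x /\ _ => assert (HS : CSp x) by (apply CS_gen; fin_contr);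
  split; [auto|split; [apply CL_gen|apply CR_gen]]; fin_contr end.
Qed.

Lemma move_l {A : finType} (l : list (grp A * form A)) : forall S G D,
  derKTp (map (fun p => Dbox p.1 p.2) l ++ S) (map snd l ++ G) D ->
  derKTp S (map (fun p => Dbox p.1 p.2) l ++ G) D.
Proof.
induction l as [|p l IH]; intros S G D H; simpl in *; auto.
apply derp_DT.
apply permG with (G := map (fun p => Dbox p.1 p.2) l ++ p.2 :: G); [|psolve].
apply IH. dp H.
Qed.

Lemma kt_to_plus {A : finType} (G D : list (form A)) : derKT G D -> derKTp [::] G D.
Proof.
induction 1.
- eapply derp_perm; eauto.
- apply derp_id; intros f [].
- apply derp_bot; intros f [].
- apply derp_Rand; auto.
- apply derp_Land; auto.
- apply derp_Ror; auto.
- apply derp_Lor; auto.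
- apply derp_Rimp; auto.
- apply derp_Limp; auto.
- apply derp_Rneg; auto.
- apply derp_Lneg; auto.
- apply permG with (G := map (fun p => Dbox p.1 p.2) l ++ S); [|psolve].
  apply move_l.
  apply permS with (S := [::] ++ map (fun p => Dbox p.1 p.2) l); [|psolve].
  apply KP with (n := (msize (map snd l ++ S) + msize O).+1); auto.
  + intro Z; apply weakL; auto.
  + intros f [].
- have H1 := linv IHderKT _ _ _ _ (a :: G) (lo_box H a) ltac:(psolve). simpl in H1.
  have H2 := (proj1 (proj2 (contr a))) _ _ _ G H1 ltac:(psolve).
  apply derp_DT; exact H2.
Qed.

Theorem lemma6p14 (A : finType) (hA : 0 < #|A|) (G D : list (form A)) :
  derKT G D <-> derKTp [::] G D.
Proof.
split; [apply kt_to_plus|].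
intro H; exact (plus_to_kt _ _ _ H).
Qed.
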